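(* Let $\mathfrak X=(X,\xrightarrow{F},\le)$ be a functional WSTS and let $\mathfrak S=\widehat{\mathfrak X}$ be its completion. For every state $s_0\in X$, $Cover_{\mathfrak X}(s_0)=\eta_X^{-1}(Cover_{\mathfrak S}(\eta_X(s_0)))=\eta_X^{-1}(\downarrow Clover_{\mathfrak S}(\eta_X(s_0)))$.
   Context: A functional WSTS $(X,\xrightarrow{F},\le)$: $(X,\le)$ a well partial order, $F$ a finite set of partial monotonic maps (upward-closed domain, monotone on it), $x\to f(x)$ for $x\in\operatorname{dom}f$. $Post^*$: reachability; $Cover(x)=\downarrow Post^*(\downarrow x)$. Completion: an ideal is a nonempty downward-closed directed subset of $X$; $\widehat X=\mathrm{Idl}(X)$ ordered by inclusion (a continuous dcpo, directed lubs being unions); $\eta_X(x)=\downarrow x$. For $f\in F$, $\widehat f$ has domain $\{C\mid C\cap\operatorname{dom}f\neq\emptyset\}$ and $\widehat f(C)=\downarrow f\langle C\cap\operatorname{dom}f\rangle$. $\widehat{\mathfrak X}=(\widehat X,\xrightarrow{\{\widehat f\}},\subseteq)$. In a dcpo, $\operatorname{Lub}(E)=\{\bigvee D\mid D\subseteq E\text{ directed}\}$, and $Clover_{\mathfrak S}(s)=\operatorname{Max}\operatorname{Lub}(Cover_{\mathfrak S}(s))$ (set of maximal elements). *)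

(* Defs.v *)
(* sets are predicates X -> Prop, compared extensionally. *)
From Stdlib Require Import List Relations.
Import ListNotations.
Set Implicit Arguments.

Section FWSTS.
Variable X : Type.
Variable le : X -> X -> Prop.

Definition is_wpo : Prop :=
  (forall x, le x x) /\
  (forall x y z, le x y -> le y z -> le x z) /\
  (forall x y, le x y -> le y x -> x = y) /\
  (forall u : nat -> X, exists i j, i < j /\ le (u i) (u j)).

Record pmap := {
  pdom : X -> Prop;
  pfun : X -> X;
  pdom_up : forall x y, le x y -> pdom x -> pdom y;
  pfun_mono : forall x y, pdom x -> le x y -> le (pfun x) (pfun y)
}.
End FWSTS.

Record fwsts := {
  st : Type;
  sle : st -> st -> Prop;
  swpo : is_wpo sle;
  maps : list (pmap sle)
}.

Section Defs.
Variable W : fwsts.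
Notation X := (st W).
Notation le := (@sle W).

Definition subset (A B : X -> Prop) : Prop := forall x, A x -> B x.

Definition step (x y : X) : Prop :=
  exists f, In f (maps W) /\ pdom f x /\ y = pfun f x.

Definition CoverX (s x : X) : Prop :=
  exists y, le y s /\ exists z, clos_refl_trans X step y z /\ le x z.

Definition is_ideal (C : X -> Prop) : Prop :=
  (exists x, C x) /\
  (forall x y, le x y -> C y -> C x) /\
  (forall x y, C x -> C y -> exists z, C z /\ le x z /\ le y z).

Definition eta (x : X) : X -> Prop := fun y => le y x.

(** transitions of the completion: C -> hat f (C) when C meets dom f,
    hat f(C) = downarrow f<C /\ dom f> *)
Definition hstep (C C' : X -> Prop) : Prop :=
  exists f, In f (maps W) /\ (exists x, C x /\ pdom f x) /\
    forall y, C' y <-> exists x, C x /\ pdom f x /\ le y (pfun f x).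

(** Cover_S(I) = downarrow Post^*(downarrow I), downarrow taken in Idl(X) *)
Definition CoverS (I J : X -> Prop) : Prop :=
  is_ideal J /\
  exists K, is_ideal K /\ subset K I /\
    exists L, clos_refl_trans (X -> Prop) hstep K L /\ subset J L.

Definition directed (D : (X -> Prop) -> Prop) : Prop :=
  (exists J, D J) /\
  forall J1 J2, D J1 -> D J2 -> exists J3, D J3 /\ subset J1 J3 /\ subset J2 J3.

(** Lub(E) = { \/ D | D subset of E directed }; directed lubs are unions *)
Definition Lub (E : (X -> Prop) -> Prop) (C : X -> Prop) : Prop :=
  exists D, (forall J, D J -> E J) /\ directed D /\
    forall x, C x <-> exists J, D J /\ J x.

Definition Clover (I M : X -> Prop) : Prop :=
  Lub (CoverS I) M /\
  forall M', Lub (CoverS I) M' -> subset M M' -> subset M' M.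

Definition downClover (I J : X -> Prop) : Prop :=
  is_ideal J /\ exists M, Clover I M /\ subset J M.

End Defs.

(* Main.v *)
Require Import Defs.
From Stdlib Require Import List Relations Classical ClassicalEpsilon PeanoNat.

Lemma le_refl' W (x : st W) : sle W x x.
Proof. destruct (swpo W) as [H _]; auto. Qed.
Lemma le_trans' W (x y z: st W) : sle W x y -> sle W y z -> sle W x z.
Proof. destruct (swpo W) as [_ [H _]]; eauto. Qed.

Lemma eta_ideal W (x : st W) : is_ideal W (eta W x).
Proof. unfold is_ideal, eta. split; [exists x; apply le_refl'|split].
 - intros a b H1 H2; eapply le_trans'; eauto.
 - intros a b Ha Hb; exists x; repeat split; auto; apply le_refl'. Qed.

Lemma hstep_eta W (y : st W) f : In f (maps W) -> pdom f y ->
  hstep W (eta W y) (eta W (pfun f y)).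
Proof. intros Hf Hd. exists f. split; [auto|split].
 - exists y; split; [apply le_refl'|auto].
 - intros w; unfold eta; split.
   + intros H; exists y; repeat split; auto; apply le_refl'.
   + intros [x' [Hx' [Hd' Hw]]]. eapply le_trans'; [exact Hw|]. apply pfun_mono; auto.
Qed.

Lemma sim W (y z : st W) : clos_refl_trans _ (step W) y z ->
  clos_refl_trans _ (hstep W) (eta W y) (eta W z).
Proof. induction 1.
 - destruct H as [f [Hf [Hd ->]]]. apply rt_step. apply hstep_eta; auto.
 - apply rt_refl.
 - eapply rt_trans; eauto. Qed.

Lemma L2 W s0 (y : st W) : CoverX W s0 y -> CoverS W (eta W s0) (eta W y).
Proof. intros [y0 [Hy0 [z [Hr Hle]]]]. split; [apply eta_ideal|].
 exists (eta W y0). split; [apply eta_ideal|split].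
 - intros w Hw; unfold eta in *; eapply le_trans'; eauto.
 - exists (eta W z); split; [apply sim; auto|].
   intros w Hw; unfold eta in *; eapply le_trans'; eauto. Qed.

Lemma back W (K L : st W -> Prop) : clos_refl_trans _ (hstep W) K L ->
  forall w, L w -> exists y, K y /\ exists z, clos_refl_trans _ (step W) y z /\ sle W w z.
Proof. intros H. apply clos_rt_rtn1 in H. induction H.
 - intros w Hw; exists w; split; auto; exists w; split; [apply rt_refl|apply le_refl'].
 - intros w Hw. destruct H as [f [Hf [_ Heq]]]. apply Heq in Hw.
   destruct Hw as [v [Hv [Hd Hwle]]].
   destruct (IHclos_refl_trans_n1 v Hv) as [y0 [Hy0 [z0 [Hr Hvz]]]].
   exists y0; split; auto. exists (pfun f z0). split.
   + eapply rt_trans; [exact Hr|]. apply rt_step. exists f; repeat split; auto.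
     eapply pdom_up; eauto.
   + eapply le_trans'; [exact Hwle|]. apply pfun_mono; auto.
Qed.

Lemma L1 W s0 (J : st W -> Prop) w : CoverS W (eta W s0) J -> J w -> CoverX W s0 w.
Proof. intros [_ [K [_ [HK [L [Hr HJ]]]]]] Hw.
 destruct (back W _ _ Hr w (HJ w Hw)) as [y [Hy [z [Hz Hle]]]].
 exists y; split; [apply HK; auto|]. exists z; auto. Qed.

Definition dc W (D : st W -> Prop) := forall x y, sle W x y -> D y -> D x.
Definition Rlt W (D' D : st W -> Prop) :=
  dc W D' /\ dc W D /\ subset W D' D /\ exists y, D y /\ ~ D' y.

Lemma wf_Rlt W : well_founded (Rlt W).
Proof.
 intros D0. apply NNPP; intro HnA.
 assert (Hstep : forall D : {D | ~ Acc (Rlt W) D}, exists D' : {D | ~ Acc (Rlt W) D},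
            Rlt W (proj1_sig D') (proj1_sig D)).
 { intros [D HD]. simpl. apply NNPP; intro Hn. apply HD. constructor.
   intros D' HR. apply NNPP; intro HA. apply Hn. exists (exist _ D' HA). exact HR. }
 pose (nxt := fun D => proj1_sig (constructive_indefinite_description _ (Hstep D))).
 assert (Hnxt : forall D, Rlt W (proj1_sig (nxt D)) (proj1_sig D)).
 { intro D; unfold nxt; destruct constructive_indefinite_description; simpl; auto. }
 pose (sq := fix sq n := match n with 0 => exist _ D0 HnA | S n => nxt (sq n) end).
 pose (Ds := fun n => proj1_sig (sq n)).
 assert (HR : forall n, Rlt W (Ds (S n)) (Ds n)) by (intro n; apply Hnxt).
 pose (a := fun n => proj1_sig (constructive_indefinite_description _
                (proj2 (proj2 (proj2 (HR n)))))).
 assert (Ha : forall n, Ds n (a n) /\ ~ Ds (S n) (a n)).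
 { intro n; unfold a; destruct constructive_indefinite_description; simpl; auto. }
 assert (Hch : forall i j, i <= j -> subset W (Ds j) (Ds i)).
 { intros i j Hij; induction Hij. intros w h; auto.
   intros w h. apply IHHij. apply (HR m). auto. }
 destruct (swpo W) as [_ [_ [_ Hw]]].
 destruct (Hw a) as [i [j [Hij Hle]]].
 destruct (Ha i) as [_ Hn]. apply Hn.
 destruct (HR i) as [Hdc _]. eapply Hdc; [exact Hle|].
 apply (Hch (S i) j Hij). apply Ha.
Qed.

Definition maxin W D M := is_ideal W M /\ subset W M D /\
  forall M', is_ideal W M' -> subset W M M' -> subset W M' D -> subset W M' M.

Lemma P_all W : forall D, dc W D -> forall J, is_ideal W J -> subset W J D ->
  exists M, subset W J M /\ maxin W D M.
Proof. intro D. induction (wf_Rlt W D) as [D _ IH]. intros HD J HJ HJD.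
 destruct (classic (forall x y, D x -> D y -> exists z, D z /\ sle W x z /\ sle W y z))
   as [Hdir|Hnd].
 - exists D. split; auto. split; [split; [destruct HJ as [[x Hx] _]; exists x; auto|split; auto]|].
   split; [intros w h; auto|]. intros M' _ _ H. exact H.
 - assert (Hab : exists a b, D a /\ D b /\ forall z, D z -> ~(sle W a z /\ sle W b z)).
   { apply NNPP; intro Hn. apply Hnd. intros x y Hx Hy. apply NNPP; intro Hn2.
     apply Hn. exists x, y. split; auto. split; auto. intros z Hz [H1 H2].
     apply Hn2. exists z; auto. }
   destruct Hab as [a [b [Ha [Hb Hnab]]]].
   assert (gen : forall E1 E2, Rlt W E1 D -> Rlt W E2 D ->
     (forall M', is_ideal W M' -> subset W M' D -> subset W M' E1 \/ subset W M' E2) ->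
     subset W J E1 -> exists M, subset W J M /\ maxin W D M).
   { intros E1 E2 R1 R2 Hsp HJ1.
     pose proof R1 as [dc1 [_ [s1 _]]]. pose proof R2 as [dc2 [_ [s2 _]]].
     destruct (IH E1 R1 dc1 J HJ HJ1)
       as [M1 [HJM1 [iM1 [sM1 mM1]]]].
     destruct (classic (subset W M1 E2)) as [H12|H12].
     + destruct (IH E2 R2 dc2 M1 iM1 H12)
         as [M2 [HM12 [iM2 [sM2 mM2]]]].
       exists M2. split; [intros w h; auto|]. split; auto. split; [intros w h; auto|].
       intros M'' iM'' HM2'' sM''. destruct (Hsp M'' iM'' sM'') as [h|h].
       * intros w hw. apply HM12. apply (mM1 M''); auto. intros v hv; auto.
       * apply mM2; auto.
     + exists M1. split; auto. split; auto. split; [intros w h; auto|].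
       intros M'' iM'' HM1'' sM''. destruct (Hsp M'' iM'' sM'') as [h|h].
       * apply mM1; auto.
       * exfalso; apply H12. intros w hw; auto. }
   set (D1 := fun y => D y /\ ~ sle W a y).
   set (D2 := fun y => D y /\ ~ sle W b y).
   assert (dc1 : dc W D1).
   { intros x y Hxy [Hy Hn]. split; [eapply HD; eauto|]. intro h; apply Hn; eapply le_trans'; eauto. }
   assert (dc2 : dc W D2).
   { intros x y Hxy [Hy Hn]. split; [eapply HD; eauto|]. intro h; apply Hn; eapply le_trans'; eauto. }
   assert (R1 : Rlt W D1 D).
   { split; auto. split; auto. split; [intros w [h _]; auto|].
     exists a. split; auto. intros [_ h]; apply h; apply le_refl'. }
   assert (R2 : Rlt W D2 D).
   { split; auto. split; auto. split; [intros w [h _]; auto|].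
     exists b. split; auto. intros [_ h]; apply h; apply le_refl'. }
   assert (Hsp : forall M', is_ideal W M' -> subset W M' D -> subset W M' D1 \/ subset W M' D2).
   { intros M' [_ [_ dM]] sM. apply NNPP; intro Hn. apply not_or_and in Hn. destruct Hn as [n1 n2].
     apply not_all_ex_not in n1. destruct n1 as [p n1].
     apply not_all_ex_not in n2. destruct n2 as [q n2].
     apply imply_to_and in n1. apply imply_to_and in n2.
     destruct n1 as [Mp n1]. destruct n2 as [Mq n2].
     assert (ap : sle W a p) by (apply NNPP; intro h; apply n1; split; auto).
     assert (bq : sle W b q) by (apply NNPP; intro h; apply n2; split; auto).
     destruct (dM p q Mp Mq) as [r [Mr [pr qr]]].
     apply (Hnab r); auto. split; eapply le_trans'; eauto. }
   destruct (Hsp J HJ HJD) as [h|h].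
   + apply (gen D1 D2); auto.
   + apply (gen D2 D1); auto. intros M' i s. destruct (Hsp M' i s); auto.
Qed.

Theorem proposition3p9 (W : fwsts) (s0 : st W) :
  forall x : st W,
    (CoverX W s0 x <-> CoverS W (eta W s0) (eta W x)) /\
    (CoverX W s0 x <-> downClover W (eta W s0) (eta W x)).
Proof.
  intros x.
  assert (P1 : CoverX W s0 x <-> CoverS W (eta W s0) (eta W x)).
  { split; [apply L2|intro H; eapply L1; [exact H|]; apply le_refl']. }
  split; auto. split.
  - intro Hx.
    assert (dU : dc W (CoverX W s0)).
    { intros u v Huv [y [Hy [z [Hz Hle]]]]. exists y; split; auto. exists z; split; auto.
      eapply le_trans'; eauto. }
    assert (sU : subset W (eta W x) (CoverX W s0)).
    { intros w hw. eapply dU; eauto. }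
    destruct (P_all W _ dU _ (eta_ideal W x) sU) as [M [HxM [iM [MU mM]]]].
    split; [apply eta_ideal|]. exists M. split; auto. split.
    + exists (fun J => exists y, M y /\ J = eta W y). split.
      { intros J [y [Hy ->]]. apply L2. apply MU; auto. }
      destruct iM as [[m0 Hm0] [dM dirM]].
      split; [split|].
      * exists (eta W m0). exists m0; auto.
      * intros J1 J2 [y1 [H1 ->]] [y2 [H2 ->]].
        destruct (dirM y1 y2 H1 H2) as [z [Hz [h1 h2]]].
        exists (eta W z). split; [exists z; auto|].
        split; intros w hw; unfold eta in *; eapply le_trans'; eauto.
      * intros w; split.
        { intro hw. exists (eta W w). split; [exists w; auto|apply le_refl']. }
        { intros [J [[y [Hy ->]] hj]]. eapply dM; eauto. }
    + intros M' [Dm [HDm [[[J0 HJ0] Hdir] Hun]]] HMM'. apply mM; auto.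
      * split; [|split].
        { destruct (HDm J0 HJ0) as [[[x0 hx0] _] _]. exists x0. apply Hun. eauto. }
        { intros u v huv hv. apply Hun in hv. destruct hv as [J [hJ hJv]].
          apply Hun. exists J. split; auto. destruct (HDm J hJ) as [[_ [dJ _]] _]. eauto. }
        { intros u v hu hv. apply Hun in hu. apply Hun in hv.
          destruct hu as [J1 [h1 hu]]. destruct hv as [J2 [h2 hv]].
          destruct (Hdir J1 J2 h1 h2) as [J3 [h3 [s1 s2]]].
          destruct (HDm J3 h3) as [[_ [_ dJ]] _].
          destruct (dJ u v (s1 u hu) (s2 v hv)) as [z [hz [l1 l2]]].
          exists z. split; auto. apply Hun. eauto. }
      * intros v hv. apply Hun in hv. destruct hv as [J [hJ hv]]. eapply L1; eauto.
  - intros [_ [M [[[Dm [HDm [_ Hun]]] _] HxM]]].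
    assert (hx : M x) by (apply HxM; apply le_refl').
    apply Hun in hx. destruct hx as [J [hJ hJx]]. eapply L1; eauto.
Qed.
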